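(* Let $M,M'\in\mathrm{Mat}(2,\mathbb{Z})$ be such that their reductions mod $n$ are $\mathrm{Mat}(2,\mathbb{Z}_n)^\times$-conjugate for some $n\ge2$. Then $\det(M)\equiv\det(M')$ and $\mathrm{trace}(M)\equiv\mathrm{trace}(M')$ mod $n$, and the matrix gcds $r=\mathrm{mgcd}(M)$, $r'=\mathrm{mgcd}(M')$ generate the same ideal in $\mathbb{Z}_n$, i.e. $r\,\mathbb{Z}_n=r'\,\mathbb{Z}_n$.
   Context: For $M=\begin{pmatrix}a&b\\c&d\end{pmatrix}$, $\mathrm{mgcd}(M)=\gcd(b,c,d-a)\ge0$. $\mathrm{Mat}(2,\mathbb{Z}_n)^\times$ is the group of invertible $2\times2$ matrices over $\mathbb{Z}_n=\mathbb{Z}/n\mathbb{Z}$. *)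

(* Defs.v *)
From mathcomp Require Import all_boot all_order all_algebra.
Set Implicit Arguments. Unset Strict Implicit. Unset Printing Implicit Defensive.
Import Order.TTheory GRing.Theory Num.Theory.
Local Open Scope ring_scope.

Definition mgcd (M : 'M[int]_2) : int :=
  gcdz (gcdz (M 0 1) (M 1 0)) (M 1 1 - M 0 0).

Definition redmx (n : nat) (M : 'M[int]_2) : 'M['Z_n]_2 :=
  map_mx (fun z : int => z%:~R) M.

(* Main.v *)
Require Import Defs.
From mathcomp Require Import all_boot all_order all_algebra.
Import Order.TTheory GRing.Theory Num.Theory.
Local Open Scope ring_scope.

Lemma Zn_int0 (n : nat) (z : int) : (2 <= n)%N -> (z%:~R : 'Z_n) = 0 -> (n%:Z %| z)%Z.
Proof.
move=> n2 h; rewrite dvdzE /=.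
have : (`|z|%N%:R : 'Z_n) = 0.
  move: h; rewrite [in X in X -> _](intEsign z) rmorphM /= rmorph_sign.
  by case: (z < 0) => /=; rewrite ?mul1r // mulN1r => /eqP; rewrite oppr_eq0 => /eqP.
move/(congr1 (@nat_of_ord _)); rewrite val_Zp_nat //= => h2.
by apply/dvdnP; exists (`|z| %/ n)%N; rewrite {1}(divn_eq `|z| n) h2 addn0.
Qed.

Lemma Zn_mod (n : nat) (a b : int) : (2 <= n)%N -> (a%:~R : 'Z_n) = b%:~R -> (a = b %[mod n%:Z])%Z.
Proof.
move=> n2 h; apply/eqP; rewrite eqz_mod_dvd; apply: Zn_int0 => //.
by rewrite rmorphB /= h subrr.
Qed.

Lemma redmx_det n M : \det (redmx n M) = (\det M)%:~R.
Proof. exact: (det_map_mx intr). Qed.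
Lemma redmx_tr n M : \tr (redmx n M) = (\tr M)%:~R.
Proof. exact: (trace_map_mx intr). Qed.

Section S.
Variable R : comUnitRingType.
Definition inS (g z : int) := exists k : R, z%:~R = k * g%:~R.

Lemma inS_add g x y : inS g x -> inS g y -> inS g (x + y).
Proof. by move=> [a ha] [b hb]; exists (a + b); rewrite rmorphD /= ha hb mulrDl. Qed.
Lemma inS_mul g u x : inS g x -> inS g (u * x).
Proof. by move=> [a ha]; exists (u%:~R * a); rewrite rmorphM /= ha mulrA. Qed.
Lemma inS_gcd g x y : inS g x -> inS g y -> inS g (gcdz x y).
Proof.
move=> hx hy; have [u [v <-]] := Bezoutz x y.
by apply: inS_add; apply: inS_mul.
Qed.
Lemma inS_dvd g z : (g %| z)%Z -> inS g z.
Proof. by move=> h; exists (z %/ g)%Z%:~R; rewrite -rmorphM /= divzK. Qed.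

Lemma inS_self g : inS g g.
Proof. by exists 1; rewrite mul1r. Qed.

Lemma key (M M' : 'M[int]_2) (P : 'M[R]_2) : P \in unitmx ->
  map_mx intr M' = invmx P *m map_mx intr M *m P ->
  inS (mgcd M) (mgcd M').
Proof.
move=> uP hM.
set g := mgcd M.
set N0 := M - (M 0 0)%:M.
have dv : forall i j, (g %| N0 i j)%Z.
  move=> i j; rewrite /N0 !mxE.
  have h1 : (g %| (M 0 1)%R)%Z by rewrite /g /mgcd; apply: dvdz_trans (dvdz_gcdl _ _) (dvdz_gcdl _ _).
  have h2 : (g %| (M 1 0)%R)%Z by rewrite /g /mgcd; apply: dvdz_trans (dvdz_gcdl _ _) (dvdz_gcdr _ _).
  have h3 : (g %| (M 1 1 - M 0 0)%R)%Z by rewrite /g /mgcd; apply: dvdz_gcdr.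
  have E0 : forall H : (0 < 2)%N, Ordinal H = 0 by move=> H; apply: val_inj.
  have E1 : forall H : (1 < 2)%N, Ordinal H = 1 by move=> H; apply: val_inj.
  case: i => [[|[|//]] Hi]; case: j => [[|[|//]] Hj]; rewrite ?E0 ?E1 /=;
    rewrite ?mulr1n ?mulr0n ?subr0 ?subrr ?dvdz0 //.
set K := map_mx (fun z => (z %/ g)%Z) N0.
have hN0 : map_mx (intr : int -> R) N0 = g%:~R *: map_mx (intr : int -> R) K.
  by apply/matrixP=> i j; have := dv i j; rewrite !mxE => h; rewrite -intrM mulrC divzK.
have hX : map_mx (intr : int -> R) M' - (M 0 0)%:~R%:M
     = g%:~R *: (invmx P *m map_mx (intr : int -> R) K *m P).
  rewrite hM scalemxAl scalemxAr -hN0 map_mxB /= map_scalar_mx /=.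
  by rewrite mulmxBr mulmxBl scalar_mxC -!mulmxA mulVmx // mulmx1.
set X := invmx P *m _ *m P in hX.
have e : forall i j, (M' i j)%:~R - ((M 0 0)%:~R *+ (i == j)) = g%:~R * X i j :> R.
  by move=> i j; have := congr1 (fun A : 'M[R]_2 => A i j) hX; rewrite /= !mxE.
rewrite /mgcd; apply: inS_gcd; first apply: inS_gcd.
- by exists (X 0 1); have := e 0 1; rewrite /= mulr0n subr0 mulrC.
- by exists (X 1 0); have := e 1 0; rewrite /= mulr0n subr0 mulrC.
- exists (X 1 1 - X 0 0); have := e 1 1; have := e 0 0; rewrite /= !mulr1n.
  move=> h0 h1; rewrite rmorphB /= mulrBl -!(mulrC g%:~R) -h0 -h1.
  by rewrite opprB addrA subrK.
Qed.
End S.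

Theorem proposition40 (n : nat) (M M' : 'M[int]_2) :
  (2 <= n)%N ->
  (exists2 P : 'M['Z_n]_2, P \in unitmx & redmx n M' = invmx P *m redmx n M *m P) ->
  [/\ (\det M = \det M' %[mod n%:Z])%Z,
      (\tr M = \tr M' %[mod n%:Z])%Z &
      (exists u : 'Z_n, (mgcd M)%:~R = u * (mgcd M')%:~R) /\
      (exists v : 'Z_n, (mgcd M')%:~R = v * (mgcd M)%:~R)].
Proof.
move=> n2 [P uP hM].
have uP' : invmx P \in unitmx by rewrite unitmx_inv.
have hM2 : redmx n M = invmx (invmx P) *m redmx n M' *m invmx P.
  by rewrite invmxK hM !mulmxA mulmxV // mul1mx -mulmxA mulmxV // mulmx1.
split.
- apply: Zn_mod => //; rewrite -!redmx_det hM !det_mulmx mulrAC.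
  by rewrite -det_mulmx mulVmx // det1 mul1r.
- apply: Zn_mod => //; by rewrite -!redmx_tr hM mxtrace_mulC mulmxA mulmxV // mul1mx.
- exact: (conj (key _ _ _ _ uP' hM2) (key _ _ _ _ uP hM)).
Qed.
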